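(* Let $G$ be a finite simple graph with adjacency matrix $A$ and let $W$ be a vertex subset that induces a regular subgraph, such that every vertex outside $W$ is adjacent to exactly $|W|$, $\tfrac12|W|$ or $0$ vertices of $W$. Let $G_W$ be the graph obtained by Godsil–McKay switching with respect to $W$, with adjacency matrix $A_W$. Then $\mathrm{2\text{-}rank}(G_W)\in\{\mathrm{2\text{-}rank}(G)-2,\ \mathrm{2\text{-}rank}(G),\ \mathrm{2\text{-}rank}(G)+2\}$. Moreover, if $\mathrm{2\text{-}rank}(G_W)=\mathrm{2\text{-}rank}(G)+2$, then $\mathrm{Col}_2(A)\subset\mathrm{Col}_2(A_W)$; in particular $\mathbf{1}\in\mathrm{Col}_2(A)$ then implies $\mathbf{1}\in\mathrm{Col}_2(A_W)$.
   Context: The 2-rank of a graph is the rank over $\mathbb{F}_2$ of its adjacency matrix; $\mathrm{Col}_2(M)$ is the column space of $M$ over $\mathbb{F}_2$, and $\mathbf{1}$ is the all-ones vector. Godsil–McKay switching with respect to $W$ (under the stated hypotheses on $W$): for each vertex $v\notin W$ having exactly $\tfrac12|W|$ neighbours in $W$, delete the $\tfrac12|W|$ edges between $v$ and $W$ and join $v$ instead to the other $\tfrac12|W|$ vertices of $W$; all other adjacencies are unchanged. *)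

(* Defs.v *)
From HB Require Import structures.
From mathcomp Require Import all_boot all_order all_algebra.
Set Implicit Arguments. Unset Strict Implicit. Unset Printing Implicit Defensive.
Import GRing.Theory.
Local Open Scope ring_scope.

Definition simple_graph (T : finType) (e : rel T) : Prop :=
  symmetric e /\ irreflexive e.

Definition nbrs_in (T : finType) (e : rel T) (W : {set T}) (v : T) : {set T} :=
  [set u in W | e v u].

Definition gm_switched (T : finType) (e : rel T) (W : {set T}) (v : T) : bool :=
  (v \notin W) && (2 * #|nbrs_in e W v| == #|W|)%N.

Definition gm_switch (T : finType) (e : rel T) (W : {set T}) : rel T :=
  fun x y =>
    if (gm_switched e W x && (y \in W)) || (gm_switched e W y && (x \in W))
    then ~~ e x y else e x y.

Definition adjF2 (T : finType) (e : rel T) : 'M['F_2]_#|T| :=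
  \matrix_(i, j) (e (enum_val i) (enum_val j))%:R.

Definition rank2 (T : finType) (e : rel T) : nat := \rank (adjF2 e).

Definition in_col2 (n : nat) (v : 'cV['F_2]_n) (M : 'M['F_2]_n) : bool :=
  (v^T <= M^T)%MS.

Definition col2_sub (n : nat) (M N : 'M['F_2]_n) : bool := (M^T <= N^T)%MS.

(* Main.v *)
Require Import Defs.
From HB Require Import structures.
From mathcomp Require Import all_boot all_order all_algebra.
From mathcomp Require Import zify.
Set Implicit Arguments. Unset Strict Implicit. Unset Printing Implicit Defensive.
Import GRing.Theory.
Local Open Scope ring_scope.

Lemma F2_cases (x : 'F_2) : x = 0 \/ x = 1.
Proof. by case: x => [[|[|m]]] //= H; [left|right]; apply/val_inj. Qed.

Lemma F2_dbl (x : 'F_2) : x + x = 0.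
Proof. by case: (F2_cases x) => ->; apply/val_inj. Qed.

Lemma F2_b (b : bool) : ((~~ b)%:R : 'F_2) = b%:R + 1.
Proof. by case: b; apply/val_inj. Qed.

Lemma rank_add_le m n (X Y : 'M['F_2]_(m, n)) : (\rank (X + Y)%R <= \rank X + \rank Y)%N.
Proof.
apply: leq_trans _ (mxrank_adds_leqif X Y).1.
apply: mxrankS. exact: (addmx_sub_adds (submx_refl X) (submx_refl Y)).
Qed.

Lemma symE n (A : 'M['F_2]_n) i j : A^T = A -> A i j = A j i.
Proof. by move=> H; rewrite -{1}H mxE. Qed.

Lemma F2_nz (x : 'F_2) : x != 0 -> x = 1.
Proof. by case: (F2_cases x) => ->; rewrite ?eqxx. Qed.

Lemma F2_cancel (a x y : 'F_2) : a + x + y + x + y = a.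
Proof.
by case: (F2_cases a) => ->; case: (F2_cases x)=> ->; case: (F2_cases y) => ->;
  apply/val_inj.
Qed.

Lemma rank_upd n m (X : 'M['F_2]_(m,n)) (c1 c2 : 'cV_m) (r1 r2 : 'rV_n) :
  (\rank (X + c1 *m r1 + c2 *m r2)%R <= \rank X + 2)%N.
Proof.
apply: leq_trans (rank_add_le _ _) _.
apply: leq_trans (leq_add (rank_add_le _ _) (leqnn _)) _.
have h (c : 'cV['F_2]_m) (r : 'rV['F_2]_n) : (\rank (c *m r) <= 1)%N.
  by apply: leq_trans (mxrankM_maxr _ _) (rank_leq_row _).
by rewrite -addnA leq_add2l (leq_add (h _ _) (h _ _)).
Qed.

Lemma mulM_sel n m k (f : 'I_k -> 'I_n) (B : 'M['F_2]_(m,n)) :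
  B *m (\matrix_(i, l) (i == f l)%:R) = \matrix_(i, l) B i (f l).
Proof.
apply/matrixP => i l; rewrite !mxE (bigD1 (f l)) //= big1 ?addr0.
  by rewrite mxE eqxx mulr1.
by move=> j /negbTE Hj; rewrite mxE Hj mulr0.
Qed.

Lemma selM n m k (f : 'I_k -> 'I_n) (B : 'M['F_2]_(n,m)) :
  (\matrix_(l, i) (i == f l)%:R) *m B = \matrix_(l, j) B (f l) j.
Proof.
apply/matrixP => l j; rewrite !mxE (bigD1 (f l)) //= big1 ?addr0.
  by rewrite mxE eqxx mul1r.
by move=> i /negbTE Hi; rewrite mxE Hi mul0r.
Qed.

Lemma alt_even n (A : 'M['F_2]_n) :
  A^T = A -> (forall i, A i i = 0) -> ~~ odd (\rank A).
Proof.
have [k] := ubnP (\rank A); elim: k A => // k IH A Hk Hsym Hdiag.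
have [->|nz] := eqVneq A 0; first by rewrite mxrank0.
have [p [q Hpq]] : exists p q, A p q = 1.
  have /existsP[p /existsP[q H]] : [exists p, exists q, A p q != 0].
    apply: contraR nz => /existsPn H; apply/eqP/matrixP => i j.
    by move/existsPn: (H i) => /(_ j)/negPn/eqP ->; rewrite mxE.
  by exists p, q; apply: F2_nz.
have Hqp : A q p = 1 by rewrite (symE _ _ Hsym).
pose A' := \matrix_(i, j) (A i j + A i p * A q j + A i q * A p j).
have HA : A = A' + col p A *m row q A + col q A *m row p A.
  by apply/matrixP => i j; rewrite !mxE !big_ord1 !mxE F2_cancel.
have HA2 : A' = A + col p A *m row q A + col q A *m row p A.
  by apply/matrixP => i j; rewrite !mxE !big_ord1 !mxE.
have Hsym' : A'^T = A'.
  apply/matrixP => i j; rewrite !mxE (symE j i Hsym) (symE j p Hsym)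
    (symE q i Hsym) (symE j q Hsym) (symE p i Hsym).
  by rewrite -addrA [X in _ + X]addrC addrA [A p j * _]mulrC [A q j * _]mulrC.
have Hdiag' : forall i, A' i i = 0.
  by move=> i; rewrite !mxE Hdiag add0r (symE q i Hsym) (symE p i Hsym) mulrC F2_dbl.
pose sel := fun l : 'I_2 => if val l == 0%N then p else q.
pose M : 'M['F_2]_(n, 2) := \matrix_(i, l) (i == sel l)%:R.
pose S : 'M['F_2]_(2, n) := \matrix_(l, i) (i == sel l)%:R.
pose C := S *m A.
have HA'M : A' *m M = 0.
  rewrite mulM_sel; apply/matrixP => i l; rewrite !mxE.
  case: l => [[|[|l]] Hl] //=.
    by rewrite Hqp Hdiag mulr1 mulr0 addr0 F2_dbl.
  by rewrite Hdiag Hpq mulr0 mulr1 addr0 F2_dbl.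
have HJ : C *m M = \matrix_(k, l) A (sel k) (sel l).
  by rewrite mulM_sel /C selM; apply/matrixP => k' l; rewrite !mxE.
have HJJ : (C *m M) *m (C *m M) = 1%:M.
  rewrite HJ; apply/matrixP => k' l; rewrite !mxE big_ord_recl big_ord1 !mxE.
  case: k' => [[|[|k']] Hk'] //=; case: l => [[|[|l]] Hl] //=;
    rewrite /sel /= ?Hdiag ?Hpq ?Hqp; by apply/val_inj.
have rJ : \rank (C *m M) = 2%N.
  have [u _] := mulmx1_unit HJJ; exact: mxrank_unit u.
have rC : \rank C = 2%N.
  apply/eqP; rewrite eqn_leq rank_leq_row /= -{1}rJ; exact: mxrankM_maxl.
have Z0 : (A' :&: C)%MS = 0.
  case/submxP: (capmxSl A' C) => D1 HD1.
  case/submxP: (capmxSr A' C) => D2 HD2.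
  have H0 : D2 *m (C *m M) = 0 by rewrite mulmxA -HD2 HD1 -mulmxA HA'M mulmx0.
  rewrite HD2; have -> : D2 = 0.
    by rewrite -[LHS]mulmx1 -HJJ (mulmxA D2) H0 mul0mx.
  by rewrite mul0mx.
have sum := mxrank_sum_cap A' C.
rewrite Z0 mxrank0 addn0 rC in sum.
have le1 : (\rank (A' + C)%MS <= \rank A)%N.
  apply: mxrankS; rewrite addsmx_sub submxMl andbT HA2.
  apply: addmx_sub; first apply: addmx_sub; first exact: submx_refl.
    exact: submx_trans (submxMl _ _) (row_sub _ _).
  exact: submx_trans (submxMl _ _) (row_sub _ _).
have le2 : (\rank A <= \rank A' + 2)%N by rewrite {1}HA; apply: rank_upd.
have eqr : \rank A = (\rank A' + 2)%N.
  by apply/eqP; rewrite eqn_leq le2 -sum le1.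
rewrite eqr oddD addbF.
apply: (IH A' _ Hsym' Hdiag').
by move: Hk; rewrite eqr; lia.
Qed.

Lemma adj_sym (T : finType) (e : rel T) : symmetric e -> (adjF2 e)^T = adjF2 e.
Proof. by move=> Hs; apply/matrixP => i j; rewrite !mxE Hs. Qed.

Lemma adj_diag (T : finType) (e : rel T) : irreflexive e -> forall i, adjF2 e i i = 0.
Proof. by move=> Hi i; rewrite !mxE Hi. Qed.

Lemma even_close (a b : nat) : ~~ odd a -> ~~ odd b -> (b <= a + 2)%N -> (a <= b + 2)%N ->
  [\/ (b + 2 = a)%N, b = a | b = (a + 2)%N].
Proof.
move=> oa ob h1 h2.
have ea := odd_double_half a; have eb := odd_double_half b.
rewrite (negbTE oa) (negbTE ob) /= add0n -mul2n in ea eb *.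
rewrite -ea -eb in h1 h2 *.
have : (b./2 + 1 = a./2 \/ b./2 = a./2 \/ b./2 = a./2 + 1)%N by lia.
case=> [h|[h|h]]; [apply: Or31|apply: Or32|apply: Or33]; lia.
Qed.

Theorem mainTheorem3 (T : finType) (e : rel T) (W : {set T}) :
  simple_graph e ->
  (exists k : nat, forall w, w \in W -> #|nbrs_in e W w| = k) ->
  (forall v, v \notin W ->
     [\/ #|nbrs_in e W v| = #|W|, (2 * #|nbrs_in e W v| = #|W|)%N
       | #|nbrs_in e W v| = 0%N]) ->
  let eW := gm_switch e W in
  [\/ (rank2 eW + 2 = rank2 e)%N, rank2 eW = rank2 e
    | rank2 eW = (rank2 e + 2)%N] /\
  (rank2 eW = (rank2 e + 2)%N ->
     col2_sub (adjF2 e) (adjF2 eW) /\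
     (in_col2 (const_mx 1) (adjF2 e) -> in_col2 (const_mx 1) (adjF2 eW))).
Proof.
move=> [Hs Hi] _ _ eW.
have HsW : symmetric eW.
  by move=> x y; rewrite /eW /gm_switch orbC Hs.
have HiW : irreflexive eW.
  move=> x; rewrite /eW /gm_switch /gm_switched.
  by case: (x \in W) => /=; rewrite ?andbF /= Hi.
set A := adjF2 e; set B := adjF2 eW.
pose wv : 'rV['F_2]_#|T| := \row_j (enum_val j \in W)%:R.
pose sv : 'rV['F_2]_#|T| := \row_j (gm_switched e W (enum_val j))%:R.
have HB : B = A + wv^T *m sv + sv^T *m wv.
  apply/matrixP => i j; rewrite !mxE !big_ord1 !mxE /eW /gm_switch /gm_switched.
  case: (enum_val i \in W); case: (enum_val j \in W);
  case: (2 * #|nbrs_in e W (enum_val i)| == #|W|)%N;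
  case: (2 * #|nbrs_in e W (enum_val j)| == #|W|)%N;
  case: (e (enum_val i) (enum_val j)); by apply/val_inj.
have HA : A = B + wv^T *m sv + sv^T *m wv.
  by rewrite HB; apply/matrixP => i j; rewrite !mxE F2_cancel.
have symA : A^T = A by apply: adj_sym.
have symB : B^T = B by apply: adj_sym.
have eA := alt_even symA (adj_diag Hi).
have eB := alt_even symB (adj_diag HiW).
have le1 : (\rank B <= \rank A + 2)%N by rewrite HB rank_upd.
have le2 : (\rank A <= \rank B + 2)%N by rewrite HA rank_upd.
split; first exact: even_close.
move=> Hr.
have sAB : (A <= B)%MS.
  pose V := (A + (wv + sv))%MS.
  have sBV : (B <= V)%MS.
    have swV : (wv <= V)%MS := submx_trans (addsmxSl wv sv) (addsmxSr A _).
    have ssV : (sv <= V)%MS := submx_trans (addsmxSr wv sv) (addsmxSr A _).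
    rewrite HB; apply: addmx_sub; first apply: addmx_sub.
    - exact: addsmxSl.
    - exact: submx_trans (submxMl _ _) ssV.
    - exact: submx_trans (submxMl _ _) swV.
  have rV : (\rank V <= \rank A + 2)%N.
    apply: leq_trans (mxrank_adds_leqif A _).1 _; rewrite leq_add2l.
    apply: leq_trans (mxrank_adds_leqif wv sv).1 _.
    by rewrite (leq_add (rank_leq_row wv) (rank_leq_row sv)).
  have sVB : (V <= B)%MS.
    rewrite -(mxrank_leqif_sup sBV).2 eqn_leq mxrankS //=.
    by move: Hr rV; rewrite /rank2 -/A -/B => ->.
  exact: submx_trans (addsmxSl _ _) sVB.
split; first by rewrite /col2_sub -/A -/B symA symB.
rewrite /in_col2 -/A -/B symA symB => h; exact: submx_trans h sAB.
Qed.
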